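(* Let $a>0$, $\alpha\in[0,1)$, $f\in\mathcal C_a$ and $\eta\in(0,1)$. Then $\mathrm{Sh}_\alpha(f^{\pm\eta})=(\mathrm{Sh}_\alpha(f))^{\pm\eta}$.
   Context: For $b>0$, $\mathcal C_b$ is the set of $C^1$ functions $f:\mathbb R\to\mathbb R$ that are even, satisfy $f(s)=|s|$ for $|s|\ge b$ and are strictly convex on $[-b,b]$. For any function $g:\mathbb R\to\mathbb R$, $g^{\pm\eta}(s)=(1\pm\frac\eta2)g\big(s/(1\pm\frac\eta2)\big)$; if $f\in\mathcal C_a$ then $f^{\pm\eta}\in\mathcal C_{(2\pm\eta)a/2}$. For $f\in\mathcal C_b$: $F_\alpha(s)=f(s)-\alpha s$, $x_\alpha^+=(f')^{-1}(\alpha)\in[0,b)$ (inverse of $f':[-b,b]\to[-1,1]$); let $F_\alpha^{-1}$ be the inverse of $F_\alpha|_{[x_\alpha^+,\infty)}$, $\phi=F_\alpha^{-1}\circ F_\alpha$, $\delta_x=(1-\alpha)^{-1}F_\alpha(x)-\phi(x)$, $s_\alpha=x_\alpha^++\delta_{x_\alpha^+}$; $x\mapsto x+\delta_x$ is an increasing bijection $(-\infty,x_\alpha^+]\to(-\infty,s_\alpha]$ with inverse $\tau$. Define $\mathrm{Sh}_\alpha(f)(x)=\alpha x+F_\alpha(\tau(x))$ for $x\le s_\alpha$ and $=x$ for $x>s_\alpha$. The identity holds for both signs. *)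

(* Defs.v *)
From Stdlib Require Import Reals ClassicalEpsilon.
From Coquelicot Require Import Coquelicot.
Open Scope R_scope.

Definition is_C1 (f : R -> R) : Prop :=
  forall x, ex_derive f x /\ continuous (Derive f) x.

Definition even_fun (f : R -> R) : Prop := forall s, f (- s) = f s.

Definition strictly_convex_on (a b : R) (f : R -> R) : Prop :=
  forall x y t, a <= x <= b -> a <= y <= b -> x <> y -> 0 < t < 1 ->
    f (t * x + (1 - t) * y) < t * f x + (1 - t) * f y.

Definition class_C (b : R) (f : R -> R) : Prop :=
  is_C1 f /\ even_fun f /\ (forall s, b <= Rabs s -> f s = Rabs s)
  /\ strictly_convex_on (- b) b f.

(* g^{+eta} (sgn = true) and g^{-eta} (sgn = false):
   g^{±eta}(s) = (1 ± eta/2) g (s / (1 ± eta/2)) *)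
Definition pm_factor (sgn : bool) (eta : R) : R :=
  if sgn then 1 + eta / 2 else 1 - eta / 2.

Definition pm_scale (sgn : bool) (eta : R) (g : R -> R) : R -> R :=
  fun s => pm_factor sgn eta * g (s / pm_factor sgn eta).

(* the (chosen) inverse of g restricted to the set P, evaluated at y:
   some x with P x and g x = y (unique when g is injective on P) *)
Definition inv_on (P : R -> Prop) (g : R -> R) (y : R) : R :=
  epsilon (inhabits 0) (fun x => P x /\ g x = y).

Section Shift.
Variables (alpha : R) (f : R -> R).

Definition F_al (s : R) : R := f s - alpha * s.

Definition x_plus : R := epsilon (inhabits 0) (fun x => Derive f x = alpha).

Definition F_al_inv (y : R) : R := inv_on (fun z => x_plus <= z) F_al y.

Definition phi_al (x : R) : R := F_al_inv (F_al x).

Definition delta_al (x : R) : R := / (1 - alpha) * F_al x - phi_al x.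

Definition s_al : R := x_plus + delta_al x_plus.

Definition tau_al (y : R) : R :=
  inv_on (fun x => x <= x_plus) (fun x => x + delta_al x) y.

Definition Sh (x : R) : R :=
  if Rle_dec x s_al then alpha * x + F_al (tau_al x) else x.

End Shift.

(* Main.v *)
Require Import Defs.
From Stdlib Require Import Reals ClassicalEpsilon Lra.
From Coquelicot Require Import Coquelicot.
Open Scope R_scope.

Lemma eps_unique (P : R -> Prop) x0 :
  P x0 -> (forall y, P y -> y = x0) -> epsilon (inhabits 0) P = x0.
Proof. intros H U. apply U. apply epsilon_spec. now exists x0. Qed.

Lemma der_cont (h : R -> R) t l : is_derive h t l -> continuity_pt h t.
Proof.
  intro H. apply continuity_pt_filterlim.
  apply (ex_derive_continuous (K:=R_AbsRing) (V:=R_NormedModule)). exists l; exact H.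
Qed.

Lemma mono_le (h dh : R -> R) x y :
  (forall t, is_derive h t (dh t)) -> x <= y ->
  (forall t, x <= t <= y -> 0 <= dh t) -> h x <= h y.
Proof.
  intros Hd Hxy Hpos.
  destruct (Req_dec x y) as [->|Hne]; [lra|].
  destruct (MVT_gen h x y dh) as [c [Hc Heq]].
  - intros t _; apply Hd.
  - intros t _. apply (der_cont h t (dh t)); apply Hd.
  - rewrite Rmin_left in Hc by lra. rewrite Rmax_right in Hc by lra.
    assert (0 <= dh c) by (apply Hpos; lra). nra.
Qed.

Lemma mono_lt (h dh : R -> R) x y :
  (forall t, is_derive h t (dh t)) -> x < y ->
  (forall t, x <= t <= y -> 0 <= dh t) -> (forall t, x < t <= y -> 0 < dh t) ->
  h x < h y.
Proof.
  intros Hd Hxy H1 H2.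
  set (z := (x+y)/2).
  assert (h x <= h z).
  { apply (mono_le h dh); auto; [unfold z; lra| intros; apply H1; unfold z in *; lra]. }
  destruct (MVT_gen h z y dh) as [c [Hc Heq]].
  - intros t _; apply Hd.
  - intros t _. apply (der_cont h t (dh t)); apply Hd.
  - rewrite Rmin_left in Hc by (unfold z; lra). rewrite Rmax_right in Hc by (unfold z; lra).
    assert (0 < dh c) by (apply H2; unfold z in *; lra).
    assert (0 < y - z) by (unfold z; lra). nra.
Qed.

Lemma cont_pt_intro g x0 :
  (forall eps, 0 < eps -> exists d, 0 < d /\ forall x, Rabs (x - x0) < d -> Rabs (g x - g x0) < eps) ->
  continuity_pt g x0.
Proof.
  intros H. unfold continuity_pt, continue_in, limit1_in, limit_in. simpl. unfold R_dist.
  intros eps Heps. destruct (H eps Heps) as [d [Hd Hx]]. exists d; split; [lra|].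
  intros x [_ Hx']. now apply Hx.
Qed.

Lemma cont_pt_elim g x0 : continuity_pt g x0 ->
  forall eps, 0 < eps -> exists d, 0 < d /\ forall x, Rabs (x - x0) < d -> Rabs (g x - g x0) < eps.
Proof.
  unfold continuity_pt, continue_in, limit1_in, limit_in. simpl. unfold R_dist.
  intros H eps Heps. destruct (H eps Heps) as [d [Hd Hx]]. exists d; split; [lra|].
  intros x Hxd. destruct (Req_dec x x0) as [->|Hne].
  - rewrite Rminus_eq_0, Rabs_R0; lra.
  - apply Hx. split; [split; [exact I| auto]| exact Hxd].
Qed.

Lemma x_plus_char alpha h x0 : Derive h x0 = alpha ->
  (forall y, Derive h y = alpha -> y = x0) -> x_plus alpha h = x0.
Proof. intros; unfold x_plus; apply eps_unique; auto. Qed.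

Lemma inv_on_char (P : R -> Prop) h y x0 : P x0 -> h x0 = y ->
  (forall z, P z -> h z = y -> z = x0) -> inv_on P h y = x0.
Proof. intros H1 H2 H3; unfold inv_on; apply eps_unique; [split; auto|]. intros z [? ?]; auto. Qed.

Section Analysis.
Variables (a alpha : R) (f : R -> R).
Hypothesis Ha : 0 < a.
Hypothesis Hal : 0 <= alpha < 1.
Hypothesis Hf : class_C a f.

Lemma f_der x : is_derive f x (Derive f x).
Proof. apply Derive_correct. apply (proj1 (proj1 Hf x)). Qed.

Lemma der_right s : a < s -> Derive f s = 1.
Proof.
  intros Hs. apply is_derive_unique.
  apply is_derive_ext_loc with (f := fun t => t).
  - apply filter_imp with (P := fun t => a < t).
    + intros t Ht. destruct Hf as [_ [_ [Habs _]]]. rewrite Habs; rewrite Rabs_pos_eq; lra.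
    + apply (open_gt a s Hs).
  - auto_derive; auto.
Qed.

Lemma der_left s : s < -a -> Derive f s = -1.
Proof.
  intros Hs. apply is_derive_unique.
  apply is_derive_ext_loc with (f := fun t => - t).
  - apply filter_imp with (P := fun t => t < -a).
    + intros t Ht. destruct Hf as [_ [_ [Habs _]]]. rewrite Habs; rewrite Rabs_left; lra.
    + apply (open_lt (-a) s Hs).
  - auto_derive; auto.
Qed.

Lemma tangent x z : -a <= x <= a -> -a <= z <= a -> x <> z ->
  Derive f x * (z - x) <= f z - f x.
Proof.
  intros Hx Hz Hne.
  destruct Hf as [_ [_ [_ Hconv]]].
  apply Rnot_lt_le. intros Hlt.
  set (D := Derive f x) in *.
  set (e := D * (z - x) - (f z - f x)).
  set (d := z - x).
  assert (Hd : 0 < Rabs d) by (apply Rabs_pos_lt; unfold d; lra).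
  assert (He : 0 < e) by (unfold e; lra).
  pose proof (proj1 (is_derive_Reals f x D) (f_der x)) as HL.
  destruct (HL (e / Rabs d)) as [del Hdel].
  { apply Rdiv_lt_0_compat; lra. }
  set (t := Rmin (1/2) (del / (2 * Rabs d))).
  assert (Ht0 : 0 < t).
  { unfold t. apply Rmin_glb_lt; [lra|]. apply Rdiv_lt_0_compat; [apply cond_pos| lra]. }
  assert (Ht1 : t < 1) by (unfold t; pose proof (Rmin_l (1/2) (del / (2 * Rabs d))); lra).
  assert (Htd : t * Rabs d < del).
  { assert (t <= del / (2 * Rabs d)) by apply Rmin_r.
    pose proof (cond_pos del).
    apply Rle_lt_trans with (del / (2 * Rabs d) * Rabs d).
    - apply Rmult_le_compat_r; lra.
    - replace (del / (2 * Rabs d) * Rabs d) with (del / 2) by (field; lra). lra. }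
  set (h := t * d).
  assert (Hh0 : h <> 0).
  { unfold h. apply Rmult_integral_contrapositive. split; [lra|]. intro H0. rewrite H0, Rabs_R0 in Hd. lra. }
  assert (Hh : Rabs h < del) by (unfold h; rewrite Rabs_mult, (Rabs_pos_eq t) by lra; lra).
  specialize (Hdel h Hh0 Hh).
  set (q := (f (x + h) - f x) / h) in Hdel.
  assert (Hc := Hconv z x t Hz Hx (not_eq_sym Hne) (conj Ht0 Ht1)).
  replace (t * z + (1 - t) * x) with (x + h) in Hc by (unfold h, d; ring).
  assert (Hq : f (x + h) - f x = q * h) by (unfold q; field; auto).
  assert (H1 : q * d < f z - f x).
  { apply Rmult_lt_reg_l with t; [lra|].
    replace (t * (q * d)) with (q * h) by (unfold h; ring). lra. }
  assert (H2 : Rabs (q * d - D * d) < e).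
  { replace (q * d - D * d) with ((q - D) * d) by ring. rewrite Rabs_mult.
    apply Rlt_le_trans with (e / Rabs d * Rabs d).
    - apply Rmult_lt_compat_r; lra.
    - right; field; lra. }
  assert (Ee : e = D * d - (f z - f x)) by (unfold e, d; ring).
  apply Rabs_def2 in H2. lra.
Qed.

Lemma der_strict x y : -a <= x -> x < y -> y <= a -> Derive f x < Derive f y.
Proof.
  intros H1 H2 H3.
  destruct Hf as [_ [_ [_ Hconv]]].
  set (m := (x + y) / 2).
  assert (Hc := Hconv x y (1/2) ltac:(lra) ltac:(lra) ltac:(lra) ltac:(lra)).
  replace (1 / 2 * x + (1 - 1 / 2) * y) with m in Hc by (unfold m; field).
  assert (T1 := tangent x m ltac:(lra) ltac:(unfold m; lra) ltac:(unfold m; lra)).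
  assert (T2 := tangent y m ltac:(lra) ltac:(unfold m; lra) ltac:(unfold m; lra)).
  replace (m - x) with ((y - x) / 2) in T1 by (unfold m; field).
  replace (m - y) with (- ((y - x) / 2)) in T2 by (unfold m; field).
  assert (0 < (y - x) / 2) by lra.
  nra.
Qed.

Lemma der_a : Derive f a = 1.
Proof.
  destruct (Req_dec (Derive f a) 1) as [E|Hne]; auto. exfalso.
  assert (Hc : continuity_pt (Derive f) a).
  { apply continuity_pt_filterlim. apply (proj2 (proj1 Hf a)). }
  destruct (cont_pt_elim _ _ Hc (Rabs (Derive f a - 1))) as [d [Hd Hx]].
  { apply Rabs_pos_lt; lra. }
  specialize (Hx (a + d / 2)).
  rewrite der_right in Hx by lra.
  rewrite (Rabs_minus_sym 1 (Derive f a)) in Hx.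
  assert (Rabs (a + d / 2 - a) < d) by (rewrite Rabs_pos_eq; lra).
  specialize (Hx H). lra.
Qed.

Lemma der_le1 x : Derive f x <= 1.
Proof.
  destruct (Rlt_or_le a x). { rewrite der_right; lra. }
  destruct (Rlt_or_le x (-a)). { rewrite der_left; lra. }
  destruct (Req_dec x a) as [->|]. { rewrite der_a; lra. }
  pose proof (der_strict x a ltac:(lra) ltac:(lra) ltac:(lra)). rewrite der_a in H2. lra.
Qed.

Lemma xp_exists : exists x0, Derive f x0 = alpha /\ -a <= x0 <= a /\
  forall y, Derive f y = alpha -> y = x0.
Proof.
  assert (Hloc : forall y, Derive f y = alpha -> -a <= y <= a).
  { intros y Hy. destruct (Rlt_or_le a y). { rewrite der_right in Hy; lra. }
    destruct (Rlt_or_le y (-a)). { rewrite der_left in Hy; lra. } lra. }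
  destruct (IVT_gen (Derive f) (-a-1) (a+1) alpha) as [x0 [_ Hx0]].
  - intros x. apply continuity_pt_filterlim. apply (proj2 (proj1 Hf x)).
  - rewrite der_left, der_right by lra. unfold Rmin, Rmax.
    destruct (Rle_dec (-1) 1); lra.
  - exists x0. split; [auto|]. split; [auto|].
    intros y Hy. pose proof (Hloc y Hy). pose proof (Hloc x0 Hx0).
    destruct (Rtotal_order y x0) as [Hl|[E|Hg]]; auto.
    + pose proof (der_strict y x0 ltac:(lra) Hl ltac:(lra)). lra.
    + pose proof (der_strict x0 y ltac:(lra) Hg ltac:(lra)). lra.
Qed.


Notation F := (F_al alpha f).
Notation xp := (x_plus alpha f).
Notation G := (F_al_inv alpha f).
Notation delta := (delta_al alpha f).

Lemma xp_spec : Derive f xp = alpha /\ -a <= xp <= a /\ forall y, Derive f y = alpha -> y = xp.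
Proof.
  destruct xp_exists as [x0 [H1 [H2 H3]]].
  assert (E : xp = x0) by (apply x_plus_char; auto).
  rewrite E; auto.
Qed.

Lemma der_ge t : xp <= t -> alpha <= Derive f t.
Proof.
  intros H. destruct xp_spec as [E [Hb _]].
  destruct (Rlt_or_le a t). { rewrite der_right; lra. }
  destruct (Req_dec xp t) as [<-|]; [lra|].
  pose proof (der_strict xp t ltac:(lra) ltac:(lra) ltac:(lra)). lra.
Qed.

Lemma der_gt t : xp < t -> alpha < Derive f t.
Proof.
  intros H. destruct xp_spec as [E [Hb _]].
  destruct (Rlt_or_le a t). { rewrite der_right; lra. }
  pose proof (der_strict xp t ltac:(lra) ltac:(lra) ltac:(lra)). lra.
Qed.

Lemma der_lt t : t < xp -> Derive f t < alpha.
Proof.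
  intros H. destruct xp_spec as [E [Hb _]].
  destruct (Rlt_or_le t (-a)). { rewrite der_left; lra. }
  pose proof (der_strict t xp ltac:(lra) ltac:(lra) ltac:(lra)). lra.
Qed.

Lemma F_der t : is_derive F t (Derive f t - alpha).
Proof.
  unfold F_al. auto_derive; [apply (proj1 (proj1 Hf t)) | change (Derive (fun x => f x)) with (Derive f); ring].
Qed.

Lemma F_lt x y : xp <= x -> x < y -> F x < F y.
Proof.
  intros H1 H2. apply (mono_lt F (fun t => Derive f t - alpha)); auto.
  - apply F_der.
  - intros t Ht. pose proof (der_ge t ltac:(lra)). lra.
  - intros t Ht. pose proof (der_gt t ltac:(lra)). lra.
Qed.

Lemma F_le x y : xp <= x -> x <= y -> F x <= F y.
Proof.
  intros H1 H2. destruct (Req_dec x y) as [->|]; [lra|]. left; apply F_lt; lra.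
Qed.

Lemma F_decr x y : x <= y -> y <= xp -> F y <= F x.
Proof.
  intros H1 H2.
  pose proof (mono_le (fun s => - F s) (fun t => alpha - Derive f t) x y) as M.
  simpl in M.
  assert (- F x <= - F y); [|lra].
  apply M; auto.
  - intros t. unfold F_al. auto_derive; [apply (proj1 (proj1 Hf t)) | change (Derive (fun x => f x)) with (Derive f); ring].
  - intros t Ht. destruct (Req_dec t xp) as [->|].
    + destruct xp_spec as [E _]; lra.
    + pose proof (der_lt t ltac:(lra)). lra.
Qed.

Lemma F_min x : F xp <= F x.
Proof.
  destruct (Rle_or_lt xp x).
  - apply F_le; lra.
  - apply F_decr; lra.
Qed.

Lemma F_lip w2 w1 : w2 <= w1 -> F w1 - F w2 <= (1 - alpha) * (w1 - w2).
Proof.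
  intros H.
  pose proof (mono_le (fun s => (1 - alpha) * s - F s) (fun t => 1 - Derive f t) w2 w1) as M.
  simpl in M.
  assert ((1 - alpha) * w2 - F w2 <= (1 - alpha) * w1 - F w1); [|lra].
  apply M; auto.
  - intros t. unfold F_al. auto_derive; [apply (proj1 (proj1 Hf t)) | change (Derive (fun x => f x)) with (Derive f); ring].
  - intros t _. pose proof (der_le1 t). lra.
Qed.

Lemma F_right z : a <= z -> F z = (1 - alpha) * z.
Proof.
  intros H. unfold F_al. destruct Hf as [_ [_ [Habs _]]].
  rewrite Habs; rewrite Rabs_pos_eq; try lra; ring.
Qed.

Lemma F_left z : z <= -a -> F z = - (1 + alpha) * z.
Proof.
  intros H. unfold F_al. destruct Hf as [_ [_ [Habs _]]].
  rewrite Habs; rewrite Rabs_left; try lra; ring.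
Qed.

Lemma F_cont x : continuity_pt F x.
Proof. apply (der_cont _ _ _ (F_der x)). Qed.

Lemma Finv_spec u : F xp <= u -> xp <= G u /\ F (G u) = u.
Proof.
  intros Hu. destruct xp_spec as [_ [Hb _]].
  set (B := Rmax a (u / (1 - alpha)) + 1).
  assert (HB1 : a <= Rmax a (u / (1 - alpha))) by apply Rmax_l.
  assert (HB2 : u / (1 - alpha) <= Rmax a (u / (1 - alpha))) by apply Rmax_r.
  assert (Eu : u = (1 - alpha) * (u / (1 - alpha))) by (field; lra).
  destruct (Ranalysis5.f_interv_is_interv F xp B u) as [w [Hw1 Hw2]].
  - unfold B; lra.
  - split; auto. rewrite F_right by (unfold B; lra).
    rewrite Eu at 1. apply Rmult_le_compat_l; unfold B; lra.
  - intros; apply F_cont.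
  - unfold F_al_inv, inv_on.
    apply (epsilon_spec (inhabits 0) (fun z => xp <= z /\ F z = u)).
    exists w; split; [lra|auto].
Qed.

Lemma Finv_uniq u w : xp <= w -> F w = u -> w = G u.
Proof.
  intros H1 H2.
  destruct (Finv_spec u) as [H3 H4]. { rewrite <- H2; apply F_min. }
  destruct (Rtotal_order w (G u)) as [Hl|[E|Hg]]; auto.
  - pose proof (F_lt w (G u) H1 Hl). lra.
  - pose proof (F_lt (G u) w H3 Hg). lra.
Qed.

Lemma Finv_right u : (1 - alpha) * a <= u -> G u = u / (1 - alpha).
Proof.
  intros H. destruct xp_spec as [_ [Hb _]].
  assert (a <= u / (1 - alpha)).
  { apply Rmult_le_reg_l with (1 - alpha); [lra|].
    replace ((1 - alpha) * (u / (1 - alpha))) with u by (field; lra). lra. }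
  symmetry; apply Finv_uniq; [lra|].
  rewrite F_right by lra. field; lra.
Qed.

Lemma delta_left x : x <= -a -> delta x = 0.
Proof.
  intros H. unfold delta_al, phi_al. rewrite F_left by lra.
  rewrite Finv_right by nra. field; lra.
Qed.

Lemma Finv_cont u0 : F xp <= u0 -> forall eps, 0 < eps -> exists d, 0 < d /\
  forall u, F xp <= u -> Rabs (u - u0) < d -> Rabs (G u - G u0) < eps.
Proof.
  intros Hu0 eps Heps.
  destruct (Finv_spec u0 Hu0) as [Hw0 Fw0].
  set (w0 := G u0) in *.
  assert (HU : F w0 < F (w0 + eps)) by (apply F_lt; lra).
  destruct (Req_dec w0 xp) as [E|Hne].
  - exists (F (w0 + eps) - u0). split; [lra|]. intros u Hu Hd.
    destruct (Finv_spec u Hu) as [Hw Fw]. set (w := G u) in *.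
    apply Rabs_def2 in Hd. apply Rabs_def1.
    + destruct (Rlt_or_le w (w0 + eps)); [lra|].
      pose proof (F_le (w0 + eps) w ltac:(lra) ltac:(lra)). lra.
    + lra.
  - set (w1 := Rmax xp (w0 - eps / 2)).
    assert (H1 : xp <= w1) by apply Rmax_l.
    assert (H2 : w0 - eps / 2 <= w1) by apply Rmax_r.
    assert (H3 : w1 < w0) by (apply Rmax_lub_lt; lra).
    assert (HL : F w1 < F w0) by (apply F_lt; lra).
    exists (Rmin (F (w0 + eps) - u0) (u0 - F w1)). split; [apply Rmin_glb_lt; lra|].
    intros u Hu Hd.
    pose proof (Rmin_l (F (w0 + eps) - u0) (u0 - F w1)).
    pose proof (Rmin_r (F (w0 + eps) - u0) (u0 - F w1)).
    destruct (Finv_spec u Hu) as [Hw Fw]. set (w := G u) in *.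
    apply Rabs_def2 in Hd. apply Rabs_def1.
    + destruct (Rlt_or_le w (w0 + eps)); [lra|].
      pose proof (F_le (w0 + eps) w ltac:(lra) ltac:(lra)). lra.
    + destruct (Rlt_or_le w1 w); [lra|].
      pose proof (F_le w w1 ltac:(lra) ltac:(lra)). lra.
Qed.

Lemma phi_cont x0 : continuity_pt (phi_al alpha f) x0.
Proof.
  apply cont_pt_intro. intros eps Heps.
  destruct (Finv_cont (F x0) (F_min x0) eps Heps) as [d [Hd Hc]].
  destruct (cont_pt_elim _ _ (F_cont x0) d Hd) as [d2 [Hd2 Hc2]].
  exists d2; split; auto. intros x Hx. unfold phi_al.
  apply Hc; [apply F_min| apply Hc2; auto].
Qed.

Lemma k_cont x0 : continuity_pt (fun x => x + delta x) x0.
Proof.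
  apply (continuity_pt_plus (fun x => x) (fun x => / (1 - alpha) * F x - phi_al alpha f x)).
  - apply continuity_pt_id.
  - apply (continuity_pt_minus (fun x => / (1 - alpha) * F x) (phi_al alpha f)).
    + apply (continuity_pt_scal F). apply F_cont.
    + apply phi_cont.
Qed.

Lemma k_strict x1 x2 : x1 < x2 -> x2 <= xp -> x1 + delta x1 < x2 + delta x2.
Proof.
  intros H1 H2.
  assert (Huv : F x2 <= F x1) by (apply F_decr; lra).
  destruct (Finv_spec (F x1) (F_min x1)) as [Hp1 Fp1].
  destruct (Finv_spec (F x2) (F_min x2)) as [Hp2 Fp2].
  unfold delta_al, phi_al.
  set (u := F x1) in *. set (v := F x2) in *.
  set (p1 := G u) in *. set (p2 := G v) in *.
  assert (Hp : p2 <= p1).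
  { destruct (Rle_or_lt p2 p1); auto. pose proof (F_lt p1 p2 Hp1 H). lra. }
  pose proof (F_lip p2 p1 Hp) as L.
  assert (Hi : / (1 - alpha) * (u - v) <= p1 - p2).
  { apply Rmult_le_reg_l with (1 - alpha); [lra|].
    rewrite <- Rmult_assoc, Rinv_r, Rmult_1_l by lra. lra. }
  assert (E : / (1 - alpha) * u - / (1 - alpha) * v = / (1 - alpha) * (u - v)) by ring.
  lra.
Qed.

Lemma tau_exists y : y <= s_al alpha f -> exists x, x <= xp /\ x + delta x = y.
Proof.
  intros Hy. destruct xp_spec as [_ [Hb _]].
  unfold s_al in Hy.
  destruct (Rle_or_lt y (-a)) as [Hya|Hya].
  - exists y. split; [lra|]. rewrite delta_left by lra. ring.
  - destruct (Req_dec xp (-a)) as [E|Hne].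
    + rewrite E, delta_left in Hy by lra. lra.
    + destruct (Ranalysis5.f_interv_is_interv (fun x => x + delta x) (-a) xp y) as [x [Hx1 Hx2]].
      * lra.
      * rewrite delta_left by lra. lra.
      * intros; apply k_cont.
      * exists x; split; [lra|auto].
Qed.

Lemma tau_spec y : y <= s_al alpha f ->
  tau_al alpha f y <= xp /\ tau_al alpha f y + delta (tau_al alpha f y) = y.
Proof.
  intros Hy. unfold tau_al, inv_on.
  apply (epsilon_spec (inhabits 0) (fun x => x <= xp /\ x + delta x = y)).
  now apply tau_exists.
Qed.

Lemma tau_uniq y x : y <= s_al alpha f -> x <= xp -> x + delta x = y -> x = tau_al alpha f y.
Proof.
  intros Hy H1 H2. destruct (tau_spec y Hy) as [H3 H4].
  set (t := tau_al alpha f y) in *.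
  destruct (Rtotal_order x t) as [Hl|[E|Hg]]; auto.
  - pose proof (k_strict x t Hl H3). lra.
  - pose proof (k_strict t x Hg H1). lra.
Qed.

Variable c : R.
Hypothesis Hc : 0 < c.
Notation g := (fun s => c * f (s / c)).

Lemma D_g x : Derive g x = Derive f (x / c).
Proof.
  apply is_derive_unique. auto_derive.
  - apply (proj1 (proj1 Hf (x * / c))).
  - change (Derive (fun x => f x)) with (Derive f). unfold Rdiv. field. lra.
Qed.

Lemma xp_g : x_plus alpha g = c * xp.
Proof.
  destruct xp_spec as [E [_ U]].
  apply x_plus_char.
  - rewrite D_g. replace (c * xp / c) with xp by (field; lra). auto.
  - intros y Hy. rewrite D_g in Hy. apply U in Hy.
    rewrite <- Hy. field; lra.
Qed.

Lemma F_g s : F_al alpha g s = c * F (s / c).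
Proof. unfold F_al. field. lra. Qed.

Lemma Finv_g u : c * F xp <= u -> F_al_inv alpha g u = c * G (u / c).
Proof.
  intros Hu.
  assert (Hu' : F xp <= u / c).
  { apply Rmult_le_reg_l with c; [lra|]. replace (c * (u / c)) with u by (field; lra). lra. }
  destruct (Finv_spec _ Hu') as [H1 H2].
  change (F_al_inv alpha g u) with (inv_on (fun z => x_plus alpha g <= z) (F_al alpha g) u).
  apply inv_on_char.
  - rewrite xp_g. apply Rmult_le_compat_l; lra.
  - rewrite F_g. replace (c * G (u / c) / c) with (G (u / c)) by (field; lra).
    rewrite H2. field; lra.
  - intros z Hz Fz. rewrite xp_g in Hz. rewrite F_g in Fz.
    assert (xp <= z / c).
    { apply Rmult_le_reg_l with c; [lra|]. replace (c * (z / c)) with z by (field; lra). lra. }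
    assert (F (z / c) = u / c) by (rewrite <- Fz; field; lra).
    rewrite <- (Finv_uniq (u / c) (z / c)); auto. field; lra.
Qed.

Lemma phi_g x : phi_al alpha g x = c * phi_al alpha f (x / c).
Proof.
  unfold phi_al. rewrite F_g. rewrite Finv_g.
  - replace (c * F (x / c) / c) with (F (x / c)) by (field; lra). auto.
  - apply Rmult_le_compat_l; [lra| apply F_min].
Qed.

Lemma delta_g x : delta_al alpha g x = c * delta (x / c).
Proof. unfold delta_al. rewrite phi_g, F_g. ring. Qed.

Lemma s_g : s_al alpha g = c * s_al alpha f.
Proof.
  unfold s_al. rewrite xp_g, delta_g.
  replace (c * xp / c) with xp by (field; lra). ring.
Qed.

Lemma tau_g y : y <= s_al alpha g -> tau_al alpha g y = c * tau_al alpha f (y / c).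
Proof.
  intros Hy. rewrite s_g in Hy.
  assert (Hy' : y / c <= s_al alpha f).
  { apply Rmult_le_reg_l with c; [lra|]. replace (c * (y / c)) with y by (field; lra). lra. }
  destruct (tau_spec _ Hy') as [H1 H2].
  change (tau_al alpha g y) with
    (inv_on (fun x => x <= x_plus alpha g) (fun x => x + delta_al alpha g x) y).
  apply inv_on_char.
  - rewrite xp_g. apply Rmult_le_compat_l; lra.
  - rewrite delta_g.
    replace (c * tau_al alpha f (y / c) / c) with (tau_al alpha f (y / c)) by (field; lra).
    rewrite <- Rmult_plus_distr_l, H2. field; lra.
  - intros z Hz Ez. rewrite xp_g in Hz. rewrite delta_g in Ez.
    assert (z / c <= xp).
    { apply Rmult_le_reg_l with c; [lra|]. replace (c * (z / c)) with z by (field; lra). lra. }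
    assert (z / c + delta (z / c) = y / c) by (rewrite <- Ez; field; lra).
    rewrite <- (tau_uniq (y / c) (z / c)); auto. field; lra.
Qed.

Lemma Sh_g x : Sh alpha g x = c * Sh alpha f (x / c).
Proof.
  unfold Sh. rewrite s_g.
  assert (Eq : x <= c * s_al alpha f <-> x / c <= s_al alpha f).
  { split; intros H.
    - apply Rmult_le_reg_l with c; [lra|]. replace (c * (x / c)) with x by (field; lra). lra.
    - replace x with (c * (x / c)) by (field; lra). apply Rmult_le_compat_l; lra. }
  destruct (Rle_dec x (c * s_al alpha f)) as [H1|H1];
  destruct (Rle_dec (x / c) (s_al alpha f)) as [H2|H2].
  - rewrite tau_g by (rewrite s_g; auto). rewrite F_g.
    replace (c * tau_al alpha f (x / c) / c) with (tau_al alpha f (x / c)) by (field; lra).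
    field; lra.
  - exfalso; apply H2, Eq, H1.
  - exfalso; apply H1, Eq, H2.
  - field; lra.
Qed.

End Analysis.

Theorem proposition3p25 (a alpha eta : R) (f : R -> R) :
  0 < a -> 0 <= alpha < 1 -> class_C a f -> 0 < eta < 1 ->
  forall (sgn : bool) (x : R),
    Sh alpha (pm_scale sgn eta f) x = pm_scale sgn eta (Sh alpha f) x.
Proof.
  intros Ha Hal Hf Heta sgn x. unfold pm_scale.
  assert (Hc : 0 < pm_factor sgn eta) by (unfold pm_factor; destruct sgn; lra).
  apply (Sh_g a alpha f Ha Hal Hf (pm_factor sgn eta) Hc).
Qed.
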